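(* Let $k$ be a positive integer, $a=6k+1$, $b=9k+2$, $c=9k+3$, $S=\{a,b,c\}$ and $G=\langle S\rangle$. For $i\in\mathbb{N}^*$ define $A_{i,k}=\{3ia\}$, $B_{i,k}=[3ia+1,\,3ia+3i]$, $C_{i,k}=[3ia+3k+1,\,3ia+3k+2+3(i-1)]$, $D_{i,k}=A_{i,k}+\{a\}$, $E_{i,k}=B_{i,k}+\{a\}$, $F_{i,k}=[3ia+b,\,3ia+c+3i]$, $G_{i,k}=D_{i,k}+\{a\}$, $I_{i,k}=E_{i,k}+\{a\}$, $J_{i,k}=F_{i,k}+\{a\}$, let $T_{i,k}=A_{i,k}\cup B_{i,k}\cup C_{i,k}\cup D_{i,k}\cup E_{i,k}\cup F_{i,k}\cup G_{i,k}\cup I_{i,k}\cup J_{i,k}$, and let $H_{3,k}=\{0\}\cup(S+\{0,a\})\cup\bigcup_{i\in\mathbb{N}^*}T_{i,k}$. Then: (1) $H_{3,k}$ is a submonoid of $(\mathbb{N},+,0)$ containing $S$; (2) for every $i\in[1,k-1]$: $A_{i,k}<B_{i,k}<C_{i,k}<D_{i,k}<E_{i,k}<F_{i,k}<G_{i,k}<I_{i,k}<J_{i,k}$ and $J_{i,k}<A_{i+1,k}$; moreover $A_{k,k}<B_{k,k}<C_{k,k}<D_{k,k}$; (3) $[(3k+1)a,\infty[\ \subseteq H_{3,k}$; (4) $G=H_{3,k}$; (5) $H_{3,k}$ is a $3$-permutation numerical semigroup.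
   Context: $\mathbb{N}=\{0,1,2,\dots\}$, $\mathbb{N}^*=\mathbb{N}\setminus\{0\}$. A numerical semigroup is a submonoid $G$ of $(\mathbb{N},+,0)$ with $\mathbb{N}\setminus G$ finite; $\langle S\rangle$ is the submonoid generated by $S$. Writing the elements of a numerical semigroup as $0=g_0<g_1<g_2<\cdots$, it is an $n$-permutation numerical semigroup if it is generated by $\{g_1,\dots,g_n\}$ and for every $k\in\mathbb{N}$ the tuple $(g_{kn+1}\bmod n,\dots,g_{kn+n}\bmod n)$ contains exactly one representative of each residue class mod $n$. Notation: $[a,b]=\{x\in\mathbb{N}:a\le x\le b\}$, $[a,\infty[=\{x\in\mathbb{N}:x\ge a\}$; for $X,Y\subseteq\mathbb{N}$, $X+Y=\{x+y:x\in X,y\in Y\}$. For nonempty $X,Y$, $X<Y$ means $x<y$ for all $x\in X,y\in Y$. (The set $G_{i,k}$ is unrelated to $G=\langle S\rangle$.) *)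

(* Defs.v *)
From Stdlib Require Import Arith Lia.

Definition nset := nat -> Prop.

Definition interval (lo hi : nat) : nset := fun x => lo <= x /\ x <= hi.
Definition sumset (X Y : nset) : nset :=
  fun z => exists x y, X x /\ Y y /\ z = x + y.
Definition sing (a : nat) : nset := fun x => x = a.
(* X < Y for nonempty X, Y: x < y for all x in X, y in Y
   (nonemptiness is part of the notion, as the notation is only defined
   for nonempty sets) *)
Definition set_lt (X Y : nset) : Prop :=
  (exists x, X x) /\ (exists y, Y y) /\ forall x y, X x -> Y y -> x < y.

Definition submonoid (H : nset) : Prop :=
  H 0 /\ forall x y, H x -> H y -> H (x + y).

Inductive gen (S : nset) : nset :=
| gen0 : gen S 0
| genS : forall s, S s -> gen S s
| genD : forall x y, gen S x -> gen S y -> gen S (x + y).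

Definition numerical_semigroup (G : nset) : Prop :=
  submonoid G /\ exists N, forall x, ~ G x -> x < N.

Definition enumerates (G : nset) (g : nat -> nat) : Prop :=
  (forall i j, i < j -> g i < g j) /\ (forall x, G x <-> exists i, g i = x).

Definition perm_numerical_semigroup (n : nat) (G : nset) : Prop :=
  numerical_semigroup G /\
  exists g, enumerates G g /\
    (forall x, G x <-> gen (fun s => exists j, 1 <= j <= n /\ s = g j) x) /\
    (forall k r, r < n ->
       exists j, (1 <= j <= n /\ g (k * n + j) mod n = r) /\
         forall j', 1 <= j' <= n -> g (k * n + j') mod n = r -> j' = j).

Section Sets.
Variable k : nat.
Definition a_ := 6 * k + 1.
Definition b_ := 9 * k + 2.
Definition c_ := 9 * k + 3.
Definition S_ : nset := fun x => x = a_ \/ x = b_ \/ x = c_.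

Definition A_ (i : nat) : nset := sing (3 * i * a_).
Definition B_ (i : nat) : nset := interval (3 * i * a_ + 1) (3 * i * a_ + 3 * i).
Definition C_ (i : nat) : nset :=
  interval (3 * i * a_ + 3 * k + 1) (3 * i * a_ + 3 * k + 2 + 3 * (i - 1)).
Definition D_ (i : nat) : nset := sumset (A_ i) (sing a_).
Definition E_ (i : nat) : nset := sumset (B_ i) (sing a_).
Definition F_ (i : nat) : nset := interval (3 * i * a_ + b_) (3 * i * a_ + c_ + 3 * i).
Definition G_ (i : nat) : nset := sumset (D_ i) (sing a_).
Definition I_ (i : nat) : nset := sumset (E_ i) (sing a_).
Definition J_ (i : nat) : nset := sumset (F_ i) (sing a_).
Definition T_ (i : nat) : nset := fun x =>
  A_ i x \/ B_ i x \/ C_ i x \/ D_ i x \/ E_ i x \/ F_ i x \/ G_ i x \/ I_ i x \/ J_ i x.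
Definition H3 : nset := fun x =>
  x = 0 \/ sumset S_ (fun t => t = 0 \/ t = a_) x \/ exists i, 1 <= i /\ T_ i x.
End Sets.

(* Main.v *)
Require Import Defs.
From Stdlib Require Import Arith Lia Bool.

Ltac d3 j := pose proof (Nat.div_mod_eq j 3); pose proof (Nat.mod_upper_bound j 3 ltac:(lia)).

Lemma ha k : a_ k = 6 * k + 1. Proof. reflexivity. Qed.

Ltac prep k := unfold b_, c_ in *; pose proof (ha k).

Lemma D_iff k i x : D_ k i x <-> x = 3 * i * a_ k + a_ k.
Proof. unfold D_, A_, sumset, sing. split.
  - intros [x0 [y0 [H1 [H2 H3]]]]. lia.
  - intros H. exists (3 * i * a_ k), (a_ k). lia. Qed.
Lemma E_iff k i x : E_ k i x <-> 3 * i * a_ k + 1 + a_ k <= x <= 3 * i * a_ k + 3 * i + a_ k.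
Proof. unfold E_, B_, sumset, sing, interval. split.
  - intros [x0 [y0 [H1 [H2 H3]]]]. lia.
  - intros H. exists (x - a_ k), (a_ k). lia. Qed.
Lemma G_iff k i x : G_ k i x <-> x = 3 * i * a_ k + 2 * a_ k.
Proof. unfold G_, sumset, sing. split.
  - intros [x0 [y0 [H1 [H2 H3]]]]. apply D_iff in H1. lia.
  - intros H. exists (3 * i * a_ k + a_ k), (a_ k). rewrite D_iff. lia. Qed.
Lemma I_iff k i x : I_ k i x <-> 3 * i * a_ k + 1 + 2 * a_ k <= x <= 3 * i * a_ k + 3 * i + 2 * a_ k.
Proof. unfold I_, sumset, sing. split.
  - intros [x0 [y0 [H1 [H2 H3]]]]. apply E_iff in H1. lia.
  - intros H. exists (x - a_ k), (a_ k). rewrite E_iff. lia. Qed.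
Lemma J_iff k i x : J_ k i x <-> 3 * i * a_ k + b_ k + a_ k <= x <= 3 * i * a_ k + c_ k + 3 * i + a_ k.
Proof. unfold J_, F_, sumset, sing, interval. split.
  - intros [x0 [y0 [H1 [H2 H3]]]]. lia.
  - intros H. exists (x - a_ k), (a_ k). lia. Qed.

Lemma H3_T k i x r : 1 <= i -> x = 3 * i * a_ k + r ->
  (r <= 3 * i \/ (3 * k + 1 <= r /\ r + 1 <= 3 * k + 3 * i) \/
   (a_ k <= r /\ r <= a_ k + 3 * i) \/ (b_ k <= r /\ r <= c_ k + 3 * i) \/
   (2 * a_ k <= r /\ r <= 2 * a_ k + 3 * i) \/ (a_ k + b_ k <= r /\ r <= a_ k + c_ k + 3 * i)) ->
  H3 k x.
Proof.
  intros Hi Hx H. unfold H3. right; right. exists i. split; [exact Hi|]. unfold T_.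
  destruct H as [H|[H|[H|[H|[H|H]]]]].
  - destruct (Nat.eq_dec r 0).
    + left. unfold A_, sing. lia.
    + right; left. unfold B_, interval. lia.
  - do 2 right; left. unfold C_, interval. lia.
  - destruct (Nat.eq_dec r (a_ k)).
    + do 3 right; left. rewrite D_iff. lia.
    + do 4 right; left. rewrite E_iff. lia.
  - do 5 right; left. unfold F_, interval. lia.
  - destruct (Nat.eq_dec r (2 * a_ k)).
    + do 6 right; left. rewrite G_iff. lia.
    + do 7 right; left. rewrite I_iff. lia.
  - do 8 right. rewrite J_iff. lia.
Qed.

Lemma H3_tail k x : 1 <= k -> (3 * k + 1) * a_ k <= x -> H3 k x.
Proof.
  intros hk Hx. pose proof (ha k).
  pose proof (Nat.div_mod_eq x (3 * a_ k)).
  pose proof (Nat.mod_upper_bound x (3 * a_ k) ltac:(lia)).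
  remember (x / (3 * a_ k)) as i. remember (x mod (3 * a_ k)) as r.
  assert (k <= i).
  { destruct (le_lt_dec k i); auto.
    assert (3 * a_ k * (i + 1) <= 3 * a_ k * k) by (apply Nat.mul_le_mono_l; lia). lia. }
  apply (H3_T k i x r); try lia. unfold b_, c_.
  destruct (Nat.eq_dec i k); [subst i|]; lia.
Qed.
Definition goodb k j r := (r <=? 3*(j/3)) || ((3*k+1 <=? r) && (r+1 <=? 3*k + 3*((j+2)/3))).
Definition goodP k j r := r <= 3*(j/3) \/ (3*k+1 <= r /\ r+1 <= 3*k + 3*((j+2)/3)).
Lemma goodb_P k j r : goodb k j r = true <-> goodP k j r.
Proof. unfold goodb, goodP. rewrite orb_true_iff, andb_true_iff, !Nat.leb_le. reflexivity. Qed.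

Definition hb k x := ((3*k+1)*a_ k <=? x) || ((x / a_ k <=? 3*k) && goodb k (x / a_ k) (x mod a_ k)).

Lemma divj k j r : r < a_ k -> (j*a_ k + r)/a_ k = j.
Proof. intros. symmetry. apply (Nat.div_unique _ _ _ r); [assumption|lia]. Qed.
Lemma modj k j r : r < a_ k -> (j*a_ k + r) mod a_ k = r.
Proof. intros. symmetry. apply (Nat.mod_unique _ _ j r); [assumption|lia]. Qed.

Lemma hbP k j r : r < a_ k -> (hb k (j*a_ k + r) = true <->
   ((3*k+1)*a_ k <= j*a_ k + r \/ (j <= 3*k /\ goodP k j r))).
Proof. intros. unfold hb. rewrite divj, modj by auto.
  rewrite orb_true_iff, andb_true_iff, !Nat.leb_le, goodb_P. reflexivity. Qed.

Lemma hb_dec k x : hb k x = true -> (3*k+1)*a_ k <= x \/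
   exists j r, x = j*a_ k + r /\ r < a_ k /\ j <= 3*k /\ goodP k j r.
Proof. intros H. pose proof (ha k). pose proof (Nat.div_mod_eq x (a_ k)).
  pose proof (Nat.mod_upper_bound x (a_ k) ltac:(lia)).
  unfold hb in H. rewrite orb_true_iff, andb_true_iff, !Nat.leb_le, goodb_P in H.
  destruct H as [H|[Hb1 Hb2]]; [left; exact H|right].
  exists (x / a_ k), (x mod a_ k). split; [lia|]. auto. Qed.

Lemma nottail k j r : j <= 3*k -> r < a_ k -> j*a_ k + r < (3*k+1)*a_ k.
Proof. intros. assert ((j+1)*a_ k <= (3*k+1)*a_ k) by (apply Nat.mul_le_mono_r; lia). lia. Qed.
Lemma tailj k j r : 3*k+1 <= j -> (3*k+1)*a_ k <= j*a_ k + r.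
Proof. intros. assert ((3*k+1)*a_ k <= j*a_ k) by (apply Nat.mul_le_mono_r; lia). lia. Qed.

Lemma hb_false k j r : r < a_ k -> j <= 3*k -> ~ goodP k j r -> hb k (j*a_ k + r) = false.
Proof. intros. destruct (hb k (j*a_ k + r)) eqn:E; auto. apply hbP in E; auto.
  pose proof (nottail k j r). destruct E; [lia|tauto]. Qed.
Lemma hb_intro k j r : r < a_ k -> j <= 3*k -> goodP k j r -> hb k (j*a_ k + r) = true.
Proof. intros. apply hbP; auto. Qed.
Lemma hb_tail k x : (3*k+1)*a_ k <= x -> hb k x = true.
Proof. intros. unfold hb. apply orb_true_iff. left. apply Nat.leb_le. auto. Qed.

Ltac intro_jr k j r := match goal with |- hb k ?X = true =>
  replace X with (j * a_ k + r) by lia; apply hb_intro; [lia|lia|unfold goodP] end.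

Lemma hb_H3 k x : 1 <= k -> hb k x = true -> H3 k x.
Proof.
  intros hk H. prep k. apply hb_dec in H. destruct H as [H|[j [r [Hx [Hr [Hj G]]]]]].
  - apply H3_tail; auto.
  - unfold goodP in G. d3 j. d3 (j+2).
    remember (j/3) as i. remember (j mod 3) as t. remember ((j+2)/3) as i2.
    clear Heqi Heqt Heqi2. subst j.
    assert (t = 0 \/ t = 1 \/ t = 2) as Ht by lia.
    destruct (Nat.eq_dec i 0) as [Hi|Hi].
    + subst i. destruct Ht as [Ht|[Ht|Ht]]; subst t; simpl in Hx.
      * left. lia.
      * right; left. unfold sumset, S_. unfold b_, c_.
        assert (r = 0 \/ r = 3*k+1 \/ r = 3*k+2) as Hr' by lia.
        exists (a_ k + r), 0. lia.
      * right; left. unfold sumset, S_. unfold b_, c_.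
        exists (a_ k + r), (a_ k). lia.
    + destruct Ht as [Ht|[Ht|Ht]]; subst t.
      * apply (H3_T k i x r); try lia.
      * apply (H3_T k i x (a_ k + r)); unfold b_, c_; try lia.
      * apply (H3_T k i x (2 * a_ k + r)); unfold b_, c_; try lia.
Qed.
Lemma H3_hb k x : 1 <= k -> H3 k x -> hb k x = true.
Proof.
  intros hk H. pose proof (ha k). unfold H3 in H.
  destruct H as [H|[H|[i [Hi T]]]].
  - subst x. intro_jr k 0 0. d3 0. lia.
  - unfold sumset, S_ in H. unfold b_, c_ in H.
    destruct H as [s [t [[Hs|[Hs|Hs]] [[Ht|Ht] Hx]]]]; subst s t x.
    + intro_jr k 1 0. d3 1. lia.
    + intro_jr k 2 0. d3 2. lia.
    + intro_jr k 1 (3*k+1). d3 (1+2). lia.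
    + intro_jr k 2 (3*k+1). d3 (2+2). lia.
    + intro_jr k 1 (3*k+2). d3 (1+2). lia.
    + intro_jr k 2 (3*k+2). d3 (2+2). lia.
  - destruct (le_lt_dec i k) as [Hik|Hik].
    2:{ apply hb_tail. assert ((3*k+1)*a_ k <= 3*i*a_ k) by (apply Nat.mul_le_mono_r; lia).
        unfold T_, A_, B_, C_, F_, sing, interval in T. rewrite D_iff, E_iff, G_iff, I_iff, J_iff in T.
        unfold b_, c_ in T. lia. }
    unfold T_, A_, B_, C_, F_, sing, interval in T. rewrite D_iff, E_iff, G_iff, I_iff, J_iff in T.
    unfold b_, c_ in T.
    d3 (3*i). d3 (3*i+2). d3 (3*i+1). d3 (3*i+1+2). d3 (3*i+2+2).
    destruct T as [T|[T|[T|T]]].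
    + intro_jr k (3*i) (x - 3*i*a_ k). lia.
    + intro_jr k (3*i) (x - 3*i*a_ k). lia.
    + intro_jr k (3*i) (x - 3*i*a_ k). lia.
    + destruct (Nat.eq_dec i k) as [E|E].
      { subst i. apply hb_tail. lia. }
      destruct T as [T|[T|[T|T]]].
      * intro_jr k (3*i+1) (x - 3*i*a_ k - a_ k). lia.
      * intro_jr k (3*i+1) (x - 3*i*a_ k - a_ k). lia.
      * intro_jr k (3*i+1) (x - 3*i*a_ k - a_ k). lia.
      * destruct T as [T|[T|T]].
        -- intro_jr k (3*i+2) (x - 3*i*a_ k - 2*a_ k). lia.
        -- intro_jr k (3*i+2) (x - 3*i*a_ k - 2*a_ k). lia.
        -- intro_jr k (3*i+2) (x - 3*i*a_ k - 2*a_ k). lia.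
Qed.
Lemma hb_add k x s : 1 <= k -> hb k x = true -> S_ k s -> hb k (s + x) = true.
Proof.
  intros hk H Hs. pose proof (ha k). unfold S_, b_, c_ in Hs.
  apply hb_dec in H. destruct H as [H|[j [r [Hx [Hr [Hj G]]]]]].
  { apply hb_tail. lia. }
  unfold goodP in G. d3 j. d3 (j+1). d3 (j+2). d3 (j+3). d3 (j+4).
  destruct Hs as [Hs|[Hs|Hs]]; subst s.
  - destruct (le_lt_dec (j+1) (3*k)).
    + intro_jr k (j+1) r. replace (j+1+2) with (j+3) by lia. lia.
    + apply hb_tail. pose proof (tailj k (j+1) r). lia.
  - destruct G as [G|G].
    + destruct (le_lt_dec (j+1) (3*k)).
      * intro_jr k (j+1) (r+3*k+1). replace (j+1+2) with (j+3) by lia. lia.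
      * apply hb_tail. pose proof (tailj k (j+1) r). lia.
    + destruct (le_lt_dec (j+2) (3*k)).
      * intro_jr k (j+2) (r-3*k). lia.
      * apply hb_tail. pose proof (tailj k (j+2) (r-3*k)). lia.
  - destruct G as [G|G].
    + destruct (le_lt_dec (j+1) (3*k)).
      * intro_jr k (j+1) (r+3*k+2). replace (j+1+2) with (j+3) by lia. lia.
      * apply hb_tail. pose proof (tailj k (j+1) r). lia.
    + destruct (le_lt_dec (j+2) (3*k)).
      * intro_jr k (j+2) (r-3*k+1). lia.
      * apply hb_tail. pose proof (tailj k (j+2) (r-3*k+1)). lia.
Qed.

Lemma gen_hb k x : 1 <= k -> gen (S_ k) x -> forall y, hb k y = true -> hb k (x + y) = true.
Proof.
  intros hk H. induction H as [|s Hs|x1 x2 Hx1 IH1 Hx2 IH2]; intros z Hz.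
  - exact Hz.
  - apply hb_add; auto.
  - rewrite <- Nat.add_assoc. apply IH1, IH2, Hz.
Qed.


Lemma hb0 k : hb k 0 = true.
Proof. replace 0 with (0 * a_ k + 0) by lia. apply hb_intro. pose proof (ha k); lia. lia.
  unfold goodP. d3 0. lia. Qed.

Lemma gen_H3 k x : 1 <= k -> gen (S_ k) x -> H3 k x.
Proof.
  intros hk H. apply hb_H3; auto. rewrite <- (Nat.add_0_r x). apply (gen_hb k); auto.
  apply hb0.
Qed.

Ltac gsplit u v := match goal with |- gen _ ?X => replace X with (u + v) by (unfold b_, c_ in *; lia); apply genD end.

Lemma genA k : gen (S_ k) (a_ k). Proof. apply genS. left; reflexivity. Qed.
Lemma genB k : gen (S_ k) (b_ k). Proof. apply genS. right; left; reflexivity. Qed.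
Lemma genC k : gen (S_ k) (c_ k). Proof. apply genS. right; right; reflexivity. Qed.

Lemma gen_3ia k i e : e <= 3 * i -> gen (S_ k) (3 * i * a_ k + e).
Proof.
  pose proof (ha k). revert e. induction i; intros e He.
  - replace (3 * 0 * a_ k + e) with 0 by lia. apply gen0.
  - destruct (le_lt_dec e (3*i)).
    + gsplit (3*i*a_ k + e) (a_ k + a_ k + a_ k). auto.
      apply genD; [apply genD|]; apply genA.
    + assert (e = 3*i+1 \/ e = 3*i+2 \/ e = 3*i+3) as [E|[E|E]] by lia.
      * gsplit (3*i*a_ k + 3*i) (b_ k + b_ k). apply IHi; lia.
        apply genD; apply genB.
      * gsplit (3*i*a_ k + 3*i) (b_ k + c_ k). apply IHi; lia.
        apply genD; [apply genB|apply genC].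
      * gsplit (3*i*a_ k + 3*i) (c_ k + c_ k). apply IHi; lia.
        apply genD; apply genC.
Qed.

Lemma H3_gen k x : 1 <= k -> H3 k x -> gen (S_ k) x.
Proof.
  intros hk H. pose proof (ha k) as Ha. pose proof (genA k) as GA. pose proof (genB k) as GB. pose proof (genC k) as GC.
  unfold H3 in H.
  destruct H as [H|[H|[i [Hi T]]]].
  - subst x. apply gen0.
  - unfold sumset in H. destruct H as [s [t [Hs [[Ht|Ht] Hx]]]]; subst t x.
    + rewrite Nat.add_0_r. apply genS; auto.
    + apply genD; auto. apply genS; auto.
  - unfold T_, A_, B_, C_, F_, sing, interval in T. rewrite D_iff, E_iff, G_iff, I_iff, J_iff in T.
    unfold b_, c_ in *.
    destruct T as [T|[T|[T|[T|[T|[T|[T|[T|T]]]]]]]].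
    + subst x. replace (3*i*a_ k) with (3*i*a_ k + 0) by lia. apply gen_3ia; lia.
    + replace x with (3*i*a_ k + (x - 3*i*a_ k)) by lia. apply gen_3ia; lia.
    + destruct i as [|i]; [lia|].
      destruct (le_lt_dec (x - 3*(S i)*a_ k - 3*k - 1) (3*i)).
      * gsplit (3*i*a_ k + (x - 3*(S i)*a_ k - 3*k - 1)) (a_ k + a_ k + (9*k+2)).
        apply gen_3ia; lia. apply genD; [apply genD|]; auto.
      * gsplit (3*i*a_ k + 3*i) (a_ k + a_ k + (9*k+3)).
        apply gen_3ia; lia. apply genD; [apply genD|]; auto.
    + gsplit (3*i*a_ k + 0) (a_ k). apply gen_3ia; lia. auto.
    + gsplit (3*i*a_ k + (x - a_ k - 3*i*a_ k)) (a_ k). apply gen_3ia; lia. auto.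
    + destruct (le_lt_dec (x - 3*i*a_ k - (9*k+2)) (3*i)).
      * gsplit (3*i*a_ k + (x - 3*i*a_ k - (9*k+2))) (9*k+2). apply gen_3ia; lia. auto.
      * gsplit (3*i*a_ k + 3*i) (9*k+3). apply gen_3ia; lia. auto.
    + gsplit (3*i*a_ k + 0) (a_ k + a_ k). apply gen_3ia; lia. apply genD; auto.
    + gsplit (3*i*a_ k + (x - 2*a_ k - 3*i*a_ k)) (a_ k + a_ k). apply gen_3ia; lia. apply genD; auto.
    + destruct (le_lt_dec (x - 3*i*a_ k - (9*k+2) - a_ k) (3*i)).
      * gsplit (3*i*a_ k + (x - 3*i*a_ k - (9*k+2) - a_ k)) ((9*k+2) + a_ k). apply gen_3ia; lia. apply genD; auto.
      * gsplit (3*i*a_ k + 3*i) ((9*k+3) + a_ k). apply gen_3ia; lia. apply genD; auto.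
Qed.
Fixpoint srch k fuel y := match fuel with 0 => y | S f => if hb k y then y else srch k f (S y) end.

Lemma srch_spec k fuel : forall y, (exists z, y <= z /\ z < y + fuel /\ hb k z = true) ->
  y <= srch k fuel y /\ hb k (srch k fuel y) = true /\
  forall z, y <= z < srch k fuel y -> hb k z = false.
Proof.
  induction fuel; intros y [z [H1 [H2 H3']]].
  - lia.
  - simpl. destruct (hb k y) eqn:E.
    + split; [lia|]. split; auto. intros; lia.
    + destruct (IHfuel (S y)) as [A [B C]].
      { exists z. split; [|split; auto; lia]. destruct (Nat.eq_dec y z); [subst; congruence|lia]. }
      split; [lia|]. split; auto. intros z' Hz'.
      destruct (Nat.eq_dec z' y); [subst; auto|]. apply C; lia.
Qed.

Definition nxt k y := srch k (S ((3*k+1)*a_ k)) (S y).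

Lemma nxt_spec k y : y < nxt k y /\ hb k (nxt k y) = true /\ forall z, y < z < nxt k y -> hb k z = false.
Proof.
  destruct (srch_spec k (S ((3*k+1)*a_ k)) (S y)) as [A [B C]].
  { exists (Nat.max (S y) ((3*k+1)*a_ k)). split; [lia|split; [lia|]]. apply hb_tail; lia. }
  unfold nxt. split; [lia|]. split; [exact B|]. intros; apply C; lia.
Qed.

Lemma nxt_eq k y w : y < w -> hb k w = true -> (forall z, y < z < w -> hb k z = false) -> nxt k y = w.
Proof.
  intros H1 H2 H3'. destruct (nxt_spec k y) as [A [B C]].
  destruct (lt_eq_lt_dec (nxt k y) w) as [[L|L]|L]; auto.
  - rewrite H3' in B; [discriminate|lia].
  - rewrite C in H2; [discriminate|lia].
Qed.

Fixpoint gg k n := match n with 0 => 0 | S n => nxt k (gg k n) end.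

Lemma gg_lt k n : gg k n < gg k (S n).
Proof. simpl. apply nxt_spec. Qed.
Lemma gg_mono k i j : i < j -> gg k i < gg k j.
Proof. induction j; intros H; [lia|]. pose proof (gg_lt k j).
  destruct (Nat.eq_dec i j); [subst; auto|]. specialize (IHj ltac:(lia)). lia. Qed.
Lemma gg_ge k n : n <= gg k n.
Proof. induction n; [lia|]. pose proof (gg_lt k n). lia. Qed.
Lemma gg_hb k n : hb k (gg k n) = true.
Proof. destruct n; [apply hb0|]. simpl. apply nxt_spec. Qed.

Lemma gg_surj k x : hb k x = true -> exists n, gg k n = x.
Proof.
  intros H.
  assert (forall m, gg k m <= x \/ exists n, gg k n <= x < gg k (S n)) as HH.
  { induction m.
    - left; simpl; lia.
    - destruct IHm as [L|L]; [|right; auto].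
      destruct (le_lt_dec (gg k (S m)) x); [left; auto|right; exists m; lia]. }
  destruct (HH (S x)) as [L|[n [L1 L2]]].
  - pose proof (gg_ge k (S x)). lia.
  - exists n. destruct (Nat.eq_dec (gg k n) x); auto.
    simpl in L2. destruct (nxt_spec k (gg k n)) as [_ [_ C]]. rewrite C in H; [discriminate|lia].
Qed.
Lemma gg1 k : 1 <= k -> gg k 1 = a_ k.
Proof.
  intros hk. pose proof (ha k). change (gg k 1) with (nxt k 0). apply nxt_eq.
  - lia.
  - intro_jr k 1 0. d3 1. lia.
  - intros z Hz. replace z with (0 * a_ k + z) by lia. apply hb_false; try lia.
    unfold goodP. d3 0. d3 (0+2). lia.
Qed.
Lemma gg2 k : 1 <= k -> gg k 2 = b_ k.
Proof.
  intros hk. pose proof (ha k). change (gg k 2) with (nxt k (gg k 1)). rewrite gg1 by auto.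
  unfold b_. apply nxt_eq.
  - lia.
  - intro_jr k 1 (3*k+1). d3 (1+2). lia.
  - intros z Hz. replace z with (1 * a_ k + (z - a_ k)) by lia. apply hb_false; try lia.
    unfold goodP. d3 1. d3 (1+2). lia.
Qed.
Lemma gg3 k : 1 <= k -> gg k 3 = c_ k.
Proof.
  intros hk. pose proof (ha k). change (gg k 3) with (nxt k (gg k 2)). rewrite gg2 by auto.
  unfold b_, c_. apply nxt_eq.
  - lia.
  - intro_jr k 1 (3*k+2). d3 (1+2). lia.
  - intros z Hz. lia.
Qed.

Definition Inv k n := (3*k+1)*a_ k <= gg k n \/ exists j r, gg k n = j*a_ k + r /\ r < a_ k /\
   j <= 3*k /\ goodP k j r /\ n mod 3 = (r+1) mod 3.

Lemma Inv1 k : 1 <= k -> Inv k 1.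
Proof. intros hk. right. exists 1, 0. rewrite gg1 by auto. pose proof (ha k).
  split; [lia|]. split; [lia|]. split; [lia|]. split; [|reflexivity]. unfold goodP. d3 1. lia. Qed.

Lemma step k n : 1 <= k -> 1 <= n -> Inv k n ->
  Inv k (S n) /\ (n mod 3 <> 0 -> exists q, gg k (S n) = gg k n + 3*q + 1).
Proof.
  intros hk hn HI. pose proof (ha k) as Ha. change (gg k (S n)) with (nxt k (gg k n)).
  pose proof (gg_ge k n) as Hge. unfold Inv. change (gg k (S n)) with (nxt k (gg k n)).
  destruct HI as [T|[j [r [E [Hr [Hj [G M]]]]]]].
  - assert (nxt k (gg k n) = gg k n + 1) as ->.
    { apply nxt_eq. lia. apply hb_tail; lia. intros; lia. }
    split; [left; lia|]. intros _. exists 0. lia.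
  - rewrite E in *. unfold goodP in G. d3 j. d3 (j+2). d3 n. d3 (S n). d3 (r+1). d3 (r+2).
    d3 (3*k+2). d3 (1). d3 (r+1+1). d3 (3*k+1+1). d3 (0+1).
    assert (r < 3*(j/3) \/ (3*k+1 <= r /\ r+2 <= 3*k+3*((j+2)/3)) \/ r = 3*(j/3) \/
            (3*k+1 <= r /\ r+1 = 3*k+3*((j+2)/3))) as C by lia.
    destruct C as [C|[C|[C|C]]].
    + assert (nxt k (j*a_ k + r) = j*a_ k + (r+1)) as ->.
      { apply nxt_eq. lia. apply hb_intro; try lia. unfold goodP; lia. intros; lia. }
      split; [|intros; exists 0; lia]. right. exists j, (r+1).
      split; [lia|]. split; [lia|]. split; [lia|]. split; [unfold goodP; lia|]. lia.
    + assert (nxt k (j*a_ k + r) = j*a_ k + (r+1)) as ->.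
      { apply nxt_eq. lia. apply hb_intro; try lia. unfold goodP; lia. intros; lia. }
      split; [|intros; exists 0; lia]. right. exists j, (r+1).
      split; [lia|]. split; [lia|]. split; [lia|]. split; [unfold goodP; lia|]. lia.
    + assert (j <> 0) as Hj0.
      { intro. subst j. simpl in Hge. lia. }
      assert (nxt k (j*a_ k + r) = j*a_ k + (3*k+1)) as ->.
      { apply nxt_eq. lia. apply hb_intro; try lia. unfold goodP; lia.
        intros z Hz. replace z with (j * a_ k + (z - j*a_ k)) by lia.
        apply hb_false; try lia. unfold goodP. lia. }
      split.
      * right. exists j, (3*k+1).
        split; [lia|]. split; [lia|]. split; [lia|]. split; [unfold goodP; lia|]. lia.
      * intros _. exists (k - j/3). lia.
    + assert (nxt k (j*a_ k + r) = (j+1)*a_ k + 0) as ->.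
      { apply nxt_eq. lia.
        destruct (le_lt_dec (j+1) (3*k)).
        - apply hb_intro; try lia. unfold goodP; lia.
        - apply hb_tail. apply tailj. lia.
        - intros z Hz. replace z with (j * a_ k + (z - j*a_ k)) by lia.
          apply hb_false; try lia. unfold goodP. lia. }
      split; [|intros; lia].
      destruct (le_lt_dec (j+1) (3*k)).
      * right. exists (j+1), 0.
        split; [lia|]. split; [lia|]. split; [lia|]. split; [unfold goodP; lia|]. lia.
      * left. apply tailj. lia.
Qed.

Lemma Inv_all k n : 1 <= k -> 1 <= n -> Inv k n.
Proof.
  intros hk hn. induction n; [lia|]. destruct (Nat.eq_dec n 0).
  - subst. apply Inv1; auto.
  - apply step; auto; [lia|]. apply IHn. lia.
Qed.

Lemma jump k n : 1 <= k -> 1 <= n -> n mod 3 <> 0 -> exists q, gg k (S n) = gg k n + 3*q + 1.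
Proof. intros. apply (step k n); auto. apply Inv_all; auto. Qed.
Lemma set_lt_iv (X Y : nset) l1 h1 l2 h2 :
  (forall x, X x <-> l1 <= x <= h1) -> (forall x, Y x <-> l2 <= x <= h2) ->
  l1 <= h1 -> l2 <= h2 -> h1 < l2 -> set_lt X Y.
Proof.
  intros HX HY H1 H2 H3'. split; [exists l1; apply HX; lia|]. split; [exists l2; apply HY; lia|].
  intros x y Hx Hy. apply HX in Hx. apply HY in Hy. lia.
Qed.

Lemma A_iv k i x : A_ k i x <-> 3*i*a_ k <= x <= 3*i*a_ k.
Proof. unfold A_, sing. lia. Qed.
Lemma B_iv k i x : B_ k i x <-> 3 * i * a_ k + 1 <= x <= 3 * i * a_ k + 3 * i.
Proof. reflexivity. Qed.
Lemma C_iv k i x : C_ k i x <-> 3 * i * a_ k + 3 * k + 1 <= x <= 3 * i * a_ k + 3 * k + 2 + 3 * (i - 1).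
Proof. reflexivity. Qed.
Lemma D_iv k i x : D_ k i x <-> 3*i*a_ k + a_ k <= x <= 3*i*a_ k + a_ k.
Proof. rewrite D_iff. lia. Qed.
Lemma F_iv k i x : F_ k i x <-> 3 * i * a_ k + b_ k <= x <= 3 * i * a_ k + c_ k + 3 * i.
Proof. reflexivity. Qed.
Lemma G_iv k i x : G_ k i x <-> 3*i*a_ k + 2*a_ k <= x <= 3*i*a_ k + 2*a_ k.
Proof. rewrite G_iff. lia. Qed.

Lemma gen_mono (S1 S2 : nset) x : (forall s, S1 s -> S2 s) -> gen S1 x -> gen S2 x.
Proof. intros H G. induction G. apply gen0. apply genS; auto. apply genD; auto. Qed.

Lemma triple k m r : 1 <= k -> r < 3 -> exists j, (1 <= j <= 3 /\ gg k (m * 3 + j) mod 3 = r) /\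
  forall j', 1 <= j' <= 3 -> gg k (m * 3 + j') mod 3 = r -> j' = j.
Proof.
  intros hk hr.
  destruct (jump k (m*3+1)) as [q1 Q1]; [auto|lia|d3 (m*3+1); lia|].
  destruct (jump k (m*3+2)) as [q2 Q2]; [auto|lia|d3 (m*3+2); lia|].
  replace (S (m*3+1)) with (m*3+2) in Q1 by lia.
  replace (S (m*3+2)) with (m*3+3) in Q2 by lia.
  d3 (gg k (m*3+1)). d3 (gg k (m*3+2)). d3 (gg k (m*3+3)).
  destruct (Nat.eq_dec (gg k (m*3+1) mod 3) r).
  { exists 1. split; [lia|]. intros j' Hj' Hm.
    assert (j' = 1 \/ j' = 2 \/ j' = 3) as [E1|[E1|E1]] by lia; subst j'; lia. }
  destruct (Nat.eq_dec (gg k (m*3+2) mod 3) r).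
  { exists 2. split; [lia|]. intros j' Hj' Hm.
    assert (j' = 1 \/ j' = 2 \/ j' = 3) as [E1|[E1|E1]] by lia; subst j'; lia. }
  exists 3. split; [lia|]. intros j' Hj' Hm.
  assert (j' = 1 \/ j' = 2 \/ j' = 3) as [E1|[E1|E1]] by lia; subst j'; lia.
Qed.

Theorem lemma4p3 (k : nat) (hk : 1 <= k) :
  (* (1) *)
  (submonoid (H3 k) /\ (forall x, S_ k x -> H3 k x)) /\
  (* (2) *)
  (forall i, 1 <= i <= k - 1 ->
     set_lt (A_ k i) (B_ k i) /\ set_lt (B_ k i) (C_ k i) /\
     set_lt (C_ k i) (D_ k i) /\ set_lt (D_ k i) (E_ k i) /\
     set_lt (E_ k i) (F_ k i) /\ set_lt (F_ k i) (G_ k i) /\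
     set_lt (G_ k i) (I_ k i) /\ set_lt (I_ k i) (J_ k i) /\
     set_lt (J_ k i) (A_ k (i + 1))) /\
  (set_lt (A_ k k) (B_ k k) /\ set_lt (B_ k k) (C_ k k) /\ set_lt (C_ k k) (D_ k k)) /\
  (* (3) *)
  (forall x, (3 * k + 1) * a_ k <= x -> H3 k x) /\
  (* (4) *)
  (forall x, gen (S_ k) x <-> H3 k x) /\
  (* (5) *)
  perm_numerical_semigroup 3 (H3 k).
Proof.
  pose proof (ha k) as Ha.
  assert (Hgen : forall x, gen (S_ k) x <-> H3 k x).
  { intros x; split; [apply gen_H3; auto|apply H3_gen; auto]. }
  assert (Hsm : submonoid (H3 k)).
  { split; [left; reflexivity|]. intros x y Hx Hy. apply Hgen. apply genD; apply Hgen; auto. }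
  split; [split; [exact Hsm|intros x Hx; apply Hgen, genS, Hx]|].
  split.
  { intros i Hi.
    split. eapply set_lt_iv; [apply A_iv|apply B_iv|..]; lia.
    split. eapply set_lt_iv; [apply B_iv|apply C_iv|..]; lia.
    split. eapply set_lt_iv; [apply C_iv|apply D_iv|..]; lia.
    split. eapply set_lt_iv; [apply D_iv|apply E_iff|..]; lia.
    split. eapply set_lt_iv; [apply E_iff|apply F_iv|..]; unfold b_, c_; lia.
    split. eapply set_lt_iv; [apply F_iv|apply G_iv|..]; unfold b_, c_; lia.
    split. eapply set_lt_iv; [apply G_iv|apply I_iff|..]; lia.
    split. eapply set_lt_iv; [apply I_iff|apply J_iff|..]; unfold b_, c_; lia.
    eapply set_lt_iv; [apply J_iff|apply A_iv|..]; unfold b_, c_; lia. }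
  split.
  { split. eapply set_lt_iv; [apply A_iv|apply B_iv|..]; lia.
    split. eapply set_lt_iv; [apply B_iv|apply C_iv|..]; lia.
    eapply set_lt_iv; [apply C_iv|apply D_iv|..]; lia. }
  split; [intros; apply H3_tail; auto|].
  split; [exact Hgen|].
  split.
  { split; [exact Hsm|]. exists ((3*k+1)*a_ k). intros x Hx.
    destruct (le_lt_dec ((3*k+1)*a_ k) x); auto. exfalso. apply Hx, H3_tail; auto. }
  exists (gg k). split; [|split].
  - split; [intros; apply gg_mono; auto|]. intros x. split.
    + intros H. apply gg_surj, H3_hb; auto.
    + intros [n <-]. apply hb_H3; auto. apply gg_hb.
  - intros x. rewrite <- Hgen. split; apply gen_mono.
    + intros s [Hs|[Hs|Hs]]; subst s; [exists 1|exists 2|exists 3];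
        (split; [lia|]); [rewrite gg1|rewrite gg2|rewrite gg3]; auto.
    + intros s [j [Hj Hs]]. subst s.
      assert (j = 1 \/ j = 2 \/ j = 3) as [E1|[E1|E1]] by lia; subst j;
        [rewrite gg1|rewrite gg2|rewrite gg3]; auto; unfold S_; auto.
  - intros m r Hr. apply triple; auto.
Qed.
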